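(* Let $\mathcal{X}$ and $\mathcal{Y}$ be finite sets with $2 \le |\mathcal{X}|,|\mathcal{Y}| < \infty$, and let $X,Y$ have joint pmf $P_{X,Y}$ with $P_X(x)>0$ for all $x\in\mathcal{X}$ and $P_Y(y)>0$ for all $y\in\mathcal{Y}$. Then $$\eta_{\chi^2}(P_X,P_{Y|X}) \le \eta_{\mathrm{KL}}(P_X,P_{Y|X}) \le \frac{\eta_{\chi^2}(P_X,P_{Y|X})}{\min_{x\in\mathcal{X}}P_X(x)}.$$
   Context: Let $W$ be the column stochastic matrix of the channel $P_{Y|X}$ (its $x$th column is $P_{Y|X=x}$), mapping a pmf $R_X$ on $\mathcal{X}$ to $WR_X$ on $\mathcal{Y}$. The KL divergence is $D(R_X\|P_X)=\sum_x R_X(x)\log(R_X(x)/P_X(x))$ (natural log), and the $\chi^2$-divergence is $\chi^2(R_X\|P_X)=\sum_x (R_X(x)-P_X(x))^2/P_X(x)$. For a divergence $D_\bullet$ in $\{D,\chi^2\}$, the contraction coefficient is $\eta_\bullet(P_X,P_{Y|X})=\sup\{D_\bullet(WR_X\|WP_X)/D_\bullet(R_X\|P_X): R_X \text{ a pmf on } \mathcal{X},\ 0<D_\bullet(R_X\|P_X)<\infty\}$; $\eta_{\mathrm{KL}}$ is the one for KL divergence and $\eta_{\chi^2}$ the one for $\chi^2$-divergence. *)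

(* Defs.v *)
From HB Require Import structures.
From mathcomp Require Import all_boot all_order all_algebra.
From mathcomp Require Import all_classical all_reals all_analysis.
Set Implicit Arguments. Unset Strict Implicit. Unset Printing Implicit Defensive.
Import Order.TTheory GRing.Theory Num.Theory.
Local Open Scope ring_scope.
Local Open Scope classical_set_scope.

Section Defs.
Context {R : realType}.

Definition is_pmf {T : finType} (Q : T -> R) : Prop :=
  (forall t, 0 <= Q t) /\ \sum_t Q t = 1.

(* KL divergence, natural log, with the convention 0 log(0/p) = 0.
   Only used with a reference pmf P having full support, where D is finite. *)
Definition KL {T : finType} (Q P : T -> R) : R :=
  \sum_t (if Q t == 0 then 0 else Q t * ln (Q t / P t)).

Definition chi2 {T : finType} (Q P : T -> R) : R :=
  \sum_t (Q t - P t) ^+ 2 / P t.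

Definition margX {X Y : finType} (PXY : X -> Y -> R) (x : X) : R := \sum_y PXY x y.
Definition margY {X Y : finType} (PXY : X -> Y -> R) (y : Y) : R := \sum_x PXY x y.

(* column stochastic channel matrix W(y|x) = P_{Y|X=x}(y) *)
Definition chanW {X Y : finType} (PXY : X -> Y -> R) (y : Y) (x : X) : R :=
  PXY x y / margX PXY x.

Definition applyW {X Y : finType} (PXY : X -> Y -> R) (Q : X -> R) (y : Y) : R :=
  \sum_x chanW PXY y x * Q x.

Definition eta_div (Div : forall T : finType, (T -> R) -> (T -> R) -> R)
    {X Y : finType} (PXY : X -> Y -> R) : \bar R :=
  ereal_sup [set ((Div Y (applyW PXY Q) (applyW PXY (margX PXY))
                    / Div X Q (margX PXY))%:E) |
             Q in [set Q : X -> R | is_pmf Q /\ 0 < Div X Q (margX PXY)]].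

Definition eta_KL {X Y : finType} (PXY : X -> Y -> R) : \bar R :=
  eta_div (fun T => @KL T) PXY.
Definition eta_chi2 {X Y : finType} (PXY : X -> Y -> R) : \bar R :=
  eta_div (fun T => @chi2 T) PXY.

Definition minf {T : finType} (f : T -> R) : R :=
  fine (\big[mine/+oo%E]_t (f t)%:E).

End Defs.

(* Main.v *)
Require Import Defs.
From HB Require Import structures.
From mathcomp Require Import all_boot all_order all_algebra.
From mathcomp Require Import all_classical all_reals all_analysis.
From mathcomp Require Import ring lra.
Import Order.TTheory GRing.Theory Num.Theory.
Local Open Scope ring_scope.
Section S.
Local Open Scope classical_set_scope.
Context {R : realType}.

Lemma der_invs (a x : R) : 0 < x + a ->
  is_derive x 1 (fun y : R => (y + a)^-1) (- (x + a)^-2).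
Proof.
move=> h.
have H : is_derive x 1 (fun y : R => y + a) 1 := is_derive_shift x 1 a.
have := @is_deriveV R (fun y : R => y + a) x 1 1 (lt0r_neq0 h) H. move=> HH. refine (is_derive_eq HH _).
by rewrite /GRing.scale /= mulr1.
Qed.

Lemma mvt1 (f df : R -> R) r : 0 < r ->
  (forall x : R, 0 < x -> is_derive x 1 f (df x)) ->
  exists c, 0 < c /\ 0 <= (c - 1) * (r - 1) /\ f r - f 1 = df c * (r - 1).
Proof.
move=> r0 hd.
have cont : forall a b : R, 0 < a -> {in `[a, b]%R, forall x, derivable f x 1}.
  move=> a b a0 => z; rewrite in_itv /= => /andP[z1 _].
  by have /hd [] : 0 < z by apply: lt_le_trans z1.
have hd' : forall a b : R, 0 < a -> forall x : R, x \in `]a, b[%R -> is_derive x 1 f (df x).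
  move=> a b a0 x; rewrite in_itv /= => /andP[z1 _]; apply: hd; exact: lt_trans z1.
case: (ltgtP r 1) => hr.
- have [c /[!in_itv] /= /andP[c1 c2] E] := MVT hr (hd' _ _ r0) (derivable_within_continuous (cont r 1 r0)).
  exists c; split; first exact: lt_trans c1.
  split; first by apply: mulr_le0; rewrite subr_le0 ltW.
  by lra.
- have [c /[!in_itv] /= /andP[c1 c2] E] := MVT hr (hd' _ _ ltr01) (derivable_within_continuous (cont 1 r ltr01)).
  exists c; split; first exact: lt_trans c1.
  split; first by apply: mulr_ge0; rewrite subr_ge0 ltW.
  by lra.
- by exists 1; rewrite hr subrr !mulr0 subrr.
Qed.

Lemma ln_low (r : R) : 0 < r -> 5/2 - (4 * r)^-1 - 27/4 * (r + 2)^-1 <= ln r.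
Proof.
move=> r0.
pose h2 := (fun y : R => (y + 0)^-1).
pose h3 := (fun y : R => (y + 2)^-1).
pose f := ((@ln R) + (1/4) *: h2 + (27/4) *: h3).
pose df := (fun x : R => x^-1 + (1/4) *: (- (x + 0)^-2) + (27/4) *: (- (x + 2)^-2)).
have hd : forall x : R, 0 < x -> is_derive x 1 f (df x).
  move=> x x0.
  have H1 : is_derive x 1 (@ln R) x^-1 := is_derive1_ln x0.
  have H2 := @der_invs 0 x ltac:(by rewrite addr0).
  have H3 := @der_invs 2 x ltac:(by apply: addr_gt0).
  exact: (is_deriveD (is_deriveD H1 (is_deriveZ (1/4) H2)) (is_deriveZ (27/4) H3)).
have [c [c0 [cr E]]] := @mvt1 f df r r0 hd.
have Ef : forall y, f y = ln y + 1/4 * (y+0)^-1 + 27/4 * (y+2)^-1 by [].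
move: E; rewrite !Ef /df /= ln1 !addr0.
have -> : c^-1 + (1 / 4) *: - c ^- 2 + (27 / 4) *: - (c + 2) ^- 2 = (c - 1)^+3 / (c^+2 * (c+2)^+2).
  rewrite /GRing.scale /=; field.
  by rewrite !gt_eqF // addr_gt0.
set D := (c - 1) ^+ 3 / _.
have HD : 0 <= D * (r - 1).
  have -> : D * (r - 1) = (c - 1)^+2 * ((c - 1) * (r - 1)) / (c^+2 * (c + 2)^+2).
    by rewrite /D; field; rewrite !gt_eqF // addr_gt0.
  by apply: divr_ge0; [apply: mulr_ge0; rewrite ?sqr_ge0 | apply: mulr_ge0; rewrite sqr_ge0].
have -> : (4 * r)^-1 = 1/4/r by rewrite invfM mul1r mulrC.
rewrite !add0r !divr1 (_ : (1 + 2 : R) = 3); last by [].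
move=> E; lra.
Qed.

Lemma ln_up1 (r : R) : 1 <= r -> ln r <= (r - r^-1) / 2.
Proof.
move=> r1; have r0 : 0 < r by apply: lt_le_trans r1.
pose h2 := (fun y : R => (y + 0)^-1).
pose f := ((1/2) *: (@id R) - (1/2) *: h2 - (@ln R)).
pose df := (fun x : R => (1/2) *: (1:R) - (1/2) *: (- (x + 0)^-2) - x^-1).
have hd : forall x : R, 0 < x -> is_derive x 1 f (df x).
  move=> x x0.
  have H1 : is_derive x 1 (@ln R) x^-1 := is_derive1_ln x0.
  have H2 := @der_invs 0 x ltac:(by rewrite addr0).
  exact: (is_deriveB (is_deriveB (is_deriveZ (1/2) (is_derive_id x 1)) (is_deriveZ (1/2) H2)) H1).
have [c [c0 [cr E]]] := @mvt1 f df r r0 hd.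
have Ef : forall y, f y = 1/2 * y - 1/2 * (y+0)^-1 - ln y by [].
move: E; rewrite !Ef /df /= ln1 !addr0.
have -> : (1 / 2) *: (1:R) - (1 / 2) *: - c ^- 2 - c^-1 = (c - 1)^+2 / (2 * c^+2).
  rewrite /GRing.scale /=; field.
  by rewrite !gt_eqF.
set D := (c - 1) ^+ 2 / _.
have HD : 0 <= D * (r - 1).
  apply: mulr_ge0; last by rewrite subr_ge0.
  by apply: divr_ge0; rewrite ?sqr_ge0 // mulr_ge0 // sqr_ge0.
rewrite invr1 => E.
have -> : (r - r^-1) / 2 = 1/2 * r - 1/2 * r^-1 by rewrite mulrC mulrBr mul1r.
lra.
Qed.

Lemma ln_up2 (r : R) : 0 < r -> r <= 1 -> ln r <= 2 - 4 * (r + 1)^-1.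
Proof.
move=> r0 r1.
pose h2 := (fun y : R => (y + 1)^-1).
pose f := (- (4 *: h2) - (@ln R)).
pose df := (fun x : R => - (4 *: (- (x + 1)^-2)) - x^-1).
have hd : forall x : R, 0 < x -> is_derive x 1 f (df x).
  move=> x x0.
  have H1 : is_derive x 1 (@ln R) x^-1 := is_derive1_ln x0.
  have H2 := @der_invs 1 x ltac:(by apply: addr_gt0).
  exact: (is_deriveB (is_deriveN (is_deriveZ 4 H2)) H1).
have [c [c0 [cr E]]] := @mvt1 f df r r0 hd.
have Ef : forall y, f y = - (4 * (y+1)^-1) - ln y by [].
move: E; rewrite !Ef /df /= ln1.
have -> : - (4 *: - (c + 1) ^- 2) - c^-1 = - ((c - 1)^+2 / (c * (c + 1)^+2)).
  rewrite /GRing.scale /=; field.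
  by rewrite !gt_eqF // addr_gt0.
set D := (c - 1) ^+ 2 / _.
have HD : 0 <= - D * (r - 1).
  rewrite mulNr -mulrN; apply: mulr_ge0; last by rewrite opprB subr_ge0.
  by apply: divr_ge0; rewrite ?sqr_ge0 // mulr_ge0 // ?sqr_ge0 // ltW.
move=> E.
have : 4 * (1 + 1)^-1 = (2:R) by field.
lra.
Qed.

Definition phi (q p : R) := (if q == 0 then 0 else q * ln (q / p)) - q + p.

Lemma phi_low (q p : R) : 0 <= q -> 0 < p ->
  3 * (q - p)^+2 / (2 * (q + 2 * p)) <= phi q p.
Proof.
move=> q0 p0; rewrite /phi.
have [->|qn0] := eqVneq q 0.
  rewrite sub0r sqrrN add0r subr0 add0r.
  have -> : 3 * p ^+ 2 / (2 * (2 * p)) = 3/4 * p by field; rewrite gt_eqF.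
  lra.
have qp : 0 < q by rewrite lt_neqAle eq_sym qn0.
have r0 : 0 < q / p by apply: divr_gt0.
have H := ln_low (q/p) r0.
have -> : 3 * (q - p) ^+ 2 / (2 * (q + 2 * p)) =
   q * (5 / 2 - (4 * (q / p))^-1 - 27 / 4 * (q / p + 2)^-1) - q + p.
  have qp2 : q + 2 * p != 0 by rewrite gt_eqF // addr_gt0 // mulr_gt0.
  have qp3 : q / p + 2 != 0 by rewrite gt_eqF // addr_gt0.
  by field; rewrite qp2 (gt_eqF qp) (gt_eqF p0).
by rewrite lerD2r lerD2r ler_wpM2l // ltW.
Qed.

Lemma phi_le_chi (q p : R) : 0 <= q -> 0 < p -> phi q p <= (q - p)^+2 / p.
Proof.
move=> q0 p0; rewrite /phi.
have [->|qn0] := eqVneq q 0.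
  by rewrite subr0 add0r sub0r sqrrN expr2 mulrK // unitfE gt_eqF.
have H : ln (q / p) <= q / p - 1.
  have := @le_ln1Dx R (q / p - 1); rewrite (addrC 1) subrK; apply.
  by rewrite ltrBrDl addrN divr_gt0 // lt_neqAle eq_sym qn0.
have -> : (q - p) ^+ 2 / p = q * (q / p - 1) - q + p.
  by field; rewrite gt_eqF.
by rewrite lerD2r lerD2r ler_wpM2l.
Qed.

Lemma phi_up (q p : R) : 0 < p -> `|q - p| < p ->
  phi q p <= (q - p)^+2 / (2 * (p - `|q - p|)).
Proof.
move=> p0 hd.
have qp : 0 < q.
  by move: hd; rewrite ltr_norml => /andP[h _]; lra.
rewrite /phi (gt_eqF qp).
have r0 : 0 < q / p by apply: divr_gt0.
have den : 0 < p - `|q - p| by rewrite subr_gt0.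
have [hqp|hqp] := leP p q.
- have r1 : 1 <= q / p by rewrite ler_pdivlMr // mul1r.
  have H := ln_up1 (q/p) r1.
  have E : q * ((q / p - (q / p)^-1) / 2) - q + p = (q - p)^+2 / (2 * p).
    by field; rewrite (gt_eqF qp) (gt_eqF p0).
  apply: (le_trans (y := (q - p)^+2 / (2 * p))).
    by rewrite -E lerD2r lerD2r ler_wpM2l // ltW.
  apply: ler_wpM2l; first by rewrite sqr_ge0.
  rewrite lef_pV2 ?posrE ?mulr_gt0 //.
  by rewrite ler_wpM2l // gerBl normr_ge0.
- have r1 : q / p <= 1 by rewrite ler_pdivrMr // mul1r ltW.
  have H := ln_up2 (q/p) r0 r1.
  have E : q * (2 - 4 * (q / p + 1)^-1) - q + p = (q - p)^+2 / (q + p).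
    have qp2 : q / p + 1 != 0 by rewrite gt_eqF // addr_gt0.
    by field; rewrite (gt_eqF p0) gt_eqF // addr_gt0.
  apply: (le_trans (y := (q - p)^+2 / (q + p))).
    by rewrite -E lerD2r lerD2r ler_wpM2l // ltW.
  apply: ler_wpM2l; first by rewrite sqr_ge0.
  have d2 : 0 < 2 * (p - `|q - p|) by rewrite mulr_gt0.
  have qp2 : 0 < q + p by rewrite addr_gt0.
  rewrite lef_pV2 ?posrE //.
  rewrite ltr0_norm ?subr_lt0 //; lra.
Qed.
End S.

Section S2.
Context {R : realType} {T : finType}.

Lemma eq_le' (a b : R) : a = b -> a <= b. Proof. by move->. Qed.

Lemma KL_phi (q p : T -> R) : \sum_t q t = \sum_t p t ->
  KL q p = \sum_t phi (q t) (p t).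
Proof.
move=> H; rewrite /phi big_split big_split /= sumrN H subrK.
by [].
Qed.

Lemma KL_le_chi2 (q p : T -> R) : (forall t, 0 <= q t) -> (forall t, 0 < p t) ->
  \sum_t q t = \sum_t p t -> KL q p <= chi2 q p.
Proof.
move=> q0 p0 H; rewrite KL_phi //; apply: ler_sum => t _; exact: phi_le_chi.
Qed.

Lemma KL_low (q p : T -> R) : (forall t, 0 <= q t) -> (forall t, 0 < p t) ->
  \sum_t q t = \sum_t p t ->
  \sum_t (q t - p t)^+2 / (2 * (p t + `|q t - p t|)) <= KL q p.
Proof.
move=> q0 p0 H; rewrite KL_phi //; apply: ler_sum => t _.
apply: le_trans _ (phi_low (q t) (p t) (q0 t) (p0 t)).
have w0 : 0 < q t + 2 * p t by apply: ltr_wpDl => //; rewrite mulr_gt0.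
have a0 : 0 < p t + `|q t - p t| by apply: ltr_wpDr.
have -> : 3 * (q t - p t) ^+ 2 / (2 * (q t + 2 * p t)) =
   (q t - p t) ^+ 2 / (2 * (q t + 2 * p t) / 3).
  by field; rewrite gt_eqF.
apply: ler_wpM2l; first exact: sqr_ge0.
rewrite lef_pV2 ?posrE ?mulr_gt0 ?divr_gt0 //.
have := ler_norm (q t - p t); have := normr_ge0 (q t - p t); lra.
Qed.

Lemma KL_up (q p : T -> R) : (forall t, 0 < p t) -> (forall t, `|q t - p t| < p t) ->
  \sum_t q t = \sum_t p t ->
  KL q p <= \sum_t (q t - p t)^+2 / (2 * (p t - `|q t - p t|)).
Proof.
move=> p0 hd H; rewrite KL_phi //; apply: ler_sum => t _; exact: phi_up.
Qed.

Lemma amgm (d w L : R) : 0 < w -> 0 < L ->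
  `|d| <= 3 * d^+2 / w / (2 * L) + L / 6 * w.
Proof.
move=> w0 L0; rewrite -subr_ge0.
have -> : 3 * d^+2 / w / (2 * L) + L / 6 * w - `|d| =
   (3 * `|d| - L * w)^+2 / (6 * L * w).
  rewrite -(real_normK (num_real d)); field; rewrite !gt_eqF //.
by apply: divr_ge0; rewrite ?sqr_ge0 // !mulr_ge0 // ltW.
Qed.

Lemma pinsker (q p : T -> R) (m : R) : (forall t, 0 <= q t) -> (forall t, 0 < p t) ->
  \sum_t q t = 1 -> \sum_t p t = 1 -> 0 < m -> (forall t, m <= p t) ->
  m * chi2 q p <= KL q p.
Proof.
move=> q0 p0 sq sp m0 mp.
set L := \sum_t `|q t - p t|.
set Tt := \sum_t 3 * (q t - p t)^+2 / (q t + 2 * p t).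
have w0 : forall t, 0 < q t + 2 * p t.
  by move=> t; apply: ltr_wpDl => //; rewrite mulr_gt0.
have KLT : Tt / 2 <= KL q p.
  rewrite KL_phi ?sq ?sp // /Tt. rewrite mulr_suml; apply: ler_sum => t _.
  apply: le_trans _ (phi_low (q t) (p t) (q0 t) (p0 t)).
  by apply: eq_le'; field; rewrite gt_eqF.
have L0 : 0 <= L by apply: sumr_ge0.
have T0 : 0 <= Tt.
  by apply: sumr_ge0 => t _; apply: divr_ge0; [apply: mulr_ge0 => //; exact: sqr_ge0 | exact: ltW].
have LT : L^+2 <= Tt.
  have [->|Lpos] := eqVneq L 0; first by rewrite expr0n.
  have Lp : 0 < L by rewrite lt_neqAle eq_sym Lpos.
  have Hs : L <= \sum_t (3 * (q t - p t)^+2 / (q t + 2 * p t) / (2 * L)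
                          + L / 6 * (q t + 2 * p t)).
    by apply: ler_sum => t _; apply: amgm.
  rewrite big_split /= -mulr_suml -mulr_sumr -/Tt big_split /= -mulr_sumr sq sp in Hs.
  have E : L^+2 = 2 * L * (L - L / 6 * (1 + 2 * 1)).
    by field.
  rewrite E; apply: (le_trans (y := 2 * L * (Tt / (2 * L)))).
    apply: ler_wpM2l; first by rewrite mulr_ge0.
    lra.
  by apply: eq_le'; field; rewrite gt_eqF.
have Ld : forall x, `|q x - p x| <= L / 2.
  move=> x.
  have S0 : \sum_t (q t - p t) = 0 by rewrite sumrB sq sp subrr.
  move: S0; rewrite (bigD1 x) //= => /eqP; rewrite addr_eq0 => /eqP E.
  have EL : L = `|q x - p x| + \sum_(t | t != x) `|q t - p t| by rewrite /L (bigD1 x).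
  have : `|q x - p x| <= \sum_(t | t != x) `|q t - p t|.
    by rewrite E normrN; apply: ler_norm_sum.
  lra.
have chiL : chi2 q p <= L^+2 / (2 * m).
  apply: (le_trans (y := \sum_t `|q t - p t| * (L / 2) / m)).
    rewrite /chi2; apply: ler_sum => t _.
    apply: (le_trans (y := (q t - p t)^+2 / m)).
      apply: ler_wpM2l; first exact: sqr_ge0.
      by rewrite lef_pV2 ?posrE.
    apply: ler_wpM2r; first by rewrite invr_ge0 ltW.
    rewrite -(real_normK (num_real (q t - p t))) expr2.
    by apply: ler_wpM2l => //.
  by rewrite -mulr_suml -mulr_suml -/L; apply: eq_le'; field; rewrite gt_eqF.
have : m * chi2 q p <= m * (L^+2 / (2 * m)).
  by apply: ler_wpM2l => //; apply: ltW.
have -> : m * (L^+2 / (2 * m)) = L^+2 / 2 by field; rewrite gt_eqF.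

lra.
Qed.
End S2.

Section S3.
Context {R : realType}.

Lemma minf_spec (T : finType) (f : T -> R) : (0 < #|T|)%N ->
  exists x0, minf f = f x0 /\ forall x, f x0 <= f x.
Proof.
move=> /card_gt0P [x1 _].
set v := (\big[mine/+oo%E]_t (f t)%:E).
have A : forall x, (v <= (f x)%:E)%E.
  move=> x; rewrite /v (bigD1 x) //= ge_min lexx //.
have B : v = +oo%E \/ exists x, v = (f x)%:E.
  rewrite /v; apply: (big_rec (fun v => v = +oo%E \/ exists x, v = (f x)%:E)); first by left.
  move=> i y _ [->|[x ->]]; right.
  - by exists i; rewrite minEle leey.
  - by rewrite minEle; case: ifP => _; [exists i|exists x].
case: B => [Hv|[x0 Hx0]].
  by have := A x1; rewrite Hv leye_eq.
exists x0; split; first by rewrite /minf -/v Hx0.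
by move=> x; have := A x; rewrite Hx0 lee_fin.
Qed.

Variables (X Y : finType) (PXY : X -> Y -> R).
Hypothesis hPX : forall x, 0 < margX PXY x.

Lemma WP_eq y : applyW PXY (margX PXY) y = margY PXY y.
Proof.
rewrite /applyW /margY; apply: eq_bigr => x _.
by rewrite /chanW divfK // gt_eqF.
Qed.

Lemma WQ_ge0 (hP0 : forall x y, 0 <= PXY x y) Q : (forall x, 0 <= Q x) ->
  forall y, 0 <= applyW PXY Q y.
Proof.
move=> Q0 y; apply: sumr_ge0 => x _; apply: mulr_ge0 => //.
by apply: divr_ge0 => //; apply: ltW.
Qed.

Lemma WQ_sum Q : \sum_y applyW PXY Q y = \sum_x Q x.
Proof.
rewrite /applyW exchange_big /=; apply: eq_bigr => x _.
rewrite /chanW -mulr_suml -mulr_suml -/(margX PXY x) divff ?mul1r //.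
by rewrite gt_eqF.
Qed.

Lemma WQ_lin (Q Q' : X -> R) (t : R) y :
  applyW PXY (fun x => Q x + t * (Q' x - Q x)) y =
  applyW PXY Q y + t * (applyW PXY Q' y - applyW PXY Q y).
Proof.
rewrite /applyW -sumrB mulr_sumr -big_split /=.
by apply: eq_bigr => x _; ring.
Qed.
End S3.



Lemma le_sum1 (R : realType) (T : finType) (F : T -> R) x :
  (forall y, 0 <= F y) -> F x <= \sum_y F y.
Proof. by move=> F0; rewrite (bigD1 x) //= lerDl sumr_ge0. Qed.

Theorem theorem2 (R : realType) (X Y : finType) (PXY : X -> Y -> R)
  (hX : (1 < #|X|)%N) (hY : (1 < #|Y|)%N)
  (hP0 : forall x y, 0 <= PXY x y)
  (hP1 : \sum_x \sum_y PXY x y = 1)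
  (hPX : forall x, 0 < margX PXY x)
  (hPY : forall y, 0 < margY PXY y) :
  (eta_chi2 PXY <= eta_KL PXY)%E /\
  (eta_KL PXY <= eta_chi2 PXY * ((minf (margX PXY))^-1)%:E)%E.
Proof.
set P := margX PXY.
have Psum : \sum_x P x = 1 by [].
have [x0 [Emin Hmin]] := @minf_spec R X P (ltnW hX).
have m0 : 0 < minf P by rewrite Emin.
have mP : forall x, minf P <= P x by move=> x; rewrite Emin.
have WPpos y : 0 < applyW PXY P y by rewrite WP_eq.
have WPsum : \sum_y applyW PXY P y = 1 by rewrite WQ_sum.
have chi2_ge0 : forall (T : finType) (q p : T -> R), (forall t, 0 < p t) -> 0 <= chi2 q p.
  by move=> T q p p0; apply: sumr_ge0 => t _; apply: divr_ge0; rewrite ?sqr_ge0 // ltW.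
split; last first.
  apply: ge_ereal_sup => _ [Q [[Q0 Qs] KLpos] <-].
  set A := chi2 (applyW PXY Q) (applyW PXY P).
  set B := chi2 Q P.
  have WQ0 : forall y, 0 <= applyW PXY Q y by apply: WQ_ge0.
  have WQs : \sum_y applyW PXY Q y = \sum_y applyW PXY P y.
    by rewrite !WQ_sum ?Qs ?Psum.
  have KLle : KL (applyW PXY Q) (applyW PXY P) <= A by apply: KL_le_chi2.
  have KLB : KL Q P <= B by apply: KL_le_chi2 => //; rewrite Qs Psum.
  have Bpos : 0 < B by apply: lt_le_trans KLB.
  have pin : minf P * B <= KL Q P by apply: pinsker.
  have A0 : 0 <= A by apply: chi2_ge0.
  have elem : ((A / B)%:E <= eta_chi2 PXY)%E.
    by apply: ereal_sup_ubound; exists Q.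
  apply: (le_trans (y := ((A / B) * (minf P)^-1)%:E)).
    rewrite lee_fin.
    apply: (le_trans (y := A / KL Q P)).
      by apply: ler_wpM2r => //; rewrite invr_ge0 ltW.
    have -> : A / B / minf P = A / (minf P * B).
      by field; rewrite !gt_eqF.
    apply: ler_wpM2l => //.
    by rewrite lef_pV2 ?posrE ?mulr_gt0.
  rewrite EFinM; apply: lee_wpmul2r => //.
  by rewrite lee_fin invr_ge0 ltW.
apply: ge_ereal_sup => _ [Q [[Q0 Qs] Bpos] <-].
set A := chi2 (applyW PXY Q) (applyW PXY P).
set B := chi2 Q P.
have A0 : 0 <= A by apply: chi2_ge0.
set a := A / B.
have a0 : 0 <= a by apply: divr_ge0 => //; apply: ltW.
apply/lee_addgt0Pr => ep ep0.
have -> : (a%:E = (a - ep)%:E + ep%:E)%E by rewrite -EFinD subrK.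
apply: leeD2r.
set K := \sum_y `|applyW PXY Q y - applyW PXY P y| / applyW PXY P y.
set K' := \sum_x `|Q x - P x| / P x.
have K0 : 0 <= K by apply: sumr_ge0 => y _; apply: divr_ge0 => //; apply: ltW.
have K'0 : 0 <= K' by apply: sumr_ge0 => y _; apply: divr_ge0 => //; apply: ltW.
have HK : forall y, `|applyW PXY Q y - applyW PXY P y| <= K * applyW PXY P y.
  move=> y; rewrite -ler_pdivrMr //.
  by apply: (@le_sum1 R _ (fun y => `|applyW PXY Q y - applyW PXY P y| / applyW PXY P y) y) => z; apply: divr_ge0 => //; apply: ltW.
have HK' : forall x, `|Q x - P x| <= K' * P x.
  move=> x; rewrite -ler_pdivrMr //.
  by apply: (@le_sum1 R _ (fun x => `|Q x - P x| / P x) x) => z; apply: divr_ge0 => //; apply: ltW.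
have Ma : 0 <= a * (K + K') by apply: mulr_ge0 => //; apply: addr_ge0.
set M := a * (K + K') + 2 * K' + 2.
have M2 : 2 <= M by rewrite /M; lra.
have M0 : 0 < M by lra.
set e' := Num.min ep 1.
have e'0 : 0 < e' by rewrite lt_min ep0 ltr01.
have e'1 : e' <= 1 by rewrite ge_min lexx orbT.
have e'e : e' <= ep by rewrite ge_min lexx.
set t := e' / M.
have t0 : 0 < t by apply: divr_gt0.
have tM : t * M = e' by rewrite /t divfK // gt_eqF.
have t1 : t <= 1/2.
  rewrite /t ler_pdivrMr //.
  have : 1/2 * 2 <= 1/2 * M by apply: ler_wpM2l.
  lra.
have tK' : t * K' <= 1/2.
  have : t * (2 * K' + 2) <= t * M.
    apply: ler_wpM2l; first exact: ltW.
    rewrite /M; lra.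
  rewrite tM mulrDr mulrA; lra.
have taK : t * (a * (K + K')) <= e'.
  rewrite -tM; apply: ler_wpM2l; first exact: ltW.
  have := K'0; rewrite /M; lra.
pose Qt := fun x => P x + t * (Q x - P x).
have Qt0 : forall x, 0 <= Qt x.
  move=> x; have -> : Qt x = (1 - t) * P x + t * Q x by rewrite /Qt; ring.
  apply: addr_ge0; apply: mulr_ge0; rewrite ?(ltW t0) ?Q0 //; last exact: ltW.
  lra.
have Qts : \sum_x Qt x = 1.
  by rewrite /Qt big_split /= -mulr_sumr sumrB Qs Psum subrr mulr0 addr0.
have Qtd : forall x, Qt x - P x = t * (Q x - P x) by move=> x; rewrite /Qt; ring.
have WQt : forall y, applyW PXY Qt y = applyW PXY P y + t * (applyW PXY Q y - applyW PXY P y).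
  by move=> y; rewrite WQ_lin.
have WQtd : forall y, applyW PXY Qt y - applyW PXY P y = t * (applyW PXY Q y - applyW PXY P y).
  by move=> y; rewrite WQt; ring.
have WQt0 : forall y, 0 <= applyW PXY Qt y by apply: WQ_ge0.
have WQts : \sum_y applyW PXY Qt y = \sum_y applyW PXY P y by rewrite !WQ_sum ?Qts ?Psum.
have KLup : KL Qt P <= t^+2 * B / (2 * (1 - t * K')).
  apply: (le_trans (@KL_up R X Qt P _ _ _)) => //.
  - move=> x; rewrite Qtd normrM gtr0_norm //.
    have := HK' x; have := hPX x.
    have : t * `|Q x - P x| <= t * (K' * P x) by apply: ler_wpM2l => //; exact: ltW.
    have : t * (K' * P x) <= 1/2 * P x by rewrite mulrA; apply: ler_wpM2r => //; exact: ltW.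
    rewrite -/P; lra.
  - by rewrite Qts Psum.
  rewrite /B /chi2 mulr_sumr mulr_suml; apply: ler_sum => x _.
  rewrite Qtd normrM gtr0_norm // (exprMn 2 t).
  have Px := hPX x; rewrite -/P in Px.
  have h1 : t * `|Q x - P x| <= t * K' * P x.
    by rewrite -mulrA; apply: ler_wpM2l => //; exact: ltW.
  have h2 : 0 < 2 * (P x * (1 - t * K')) by apply: mulr_gt0 => //; apply: mulr_gt0 => //; lra.
  have -> : t ^+ 2 * ((Q x - P x) ^+ 2 / P x) / (2 * (1 - t * K')) =
            t ^+ 2 * (Q x - P x) ^+ 2 / (2 * (P x * (1 - t * K'))).
    by field; rewrite !gt_eqF //; lra.
  apply: ler_wpM2l; first by apply: mulr_ge0; rewrite sqr_ge0.
  rewrite lef_pV2 ?posrE //; last by apply: mulr_gt0 => //; lra.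
  lra.
have KLlow : t^+2 * A / (2 * (1 + t * K)) <= KL (applyW PXY Qt) (applyW PXY P).
  apply: le_trans (@KL_low R Y (applyW PXY Qt) (applyW PXY P) _ _ _) => //.
  rewrite /A /chi2 mulr_sumr mulr_suml; apply: ler_sum => y _.
  rewrite WQtd normrM gtr0_norm // (exprMn 2 t).
  have Py := WPpos y.
  have h1 : t * `|applyW PXY Q y - applyW PXY P y| <= t * K * applyW PXY P y.
    by rewrite -mulrA; apply: ler_wpM2l => //; exact: ltW.
  have h2 : 0 < 2 * (applyW PXY P y * (1 + t * K)).
    by apply: mulr_gt0 => //; apply: mulr_gt0 => //; apply: ltr_wpDr => //; apply: mulr_ge0 => //; exact: ltW.
  have -> : t ^+ 2 * ((applyW PXY Q y - applyW PXY P y) ^+ 2 / applyW PXY P y) / (2 * (1 + t * K)) =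
            t ^+ 2 * (applyW PXY Q y - applyW PXY P y) ^+ 2 / (2 * (applyW PXY P y * (1 + t * K))).
    field; rewrite !gt_eqF //; apply: ltr_wpDr => //; apply: mulr_ge0 => //; exact: ltW.
  apply: ler_wpM2l; first by apply: mulr_ge0; rewrite sqr_ge0.
  have tn : 0 <= t * `|applyW PXY Q y - applyW PXY P y| by apply: mulr_ge0 => //; exact: ltW.
  have h3 : 0 < 2 * (applyW PXY P y + t * `|applyW PXY Q y - applyW PXY P y|).
    by apply: mulr_gt0 => //; lra.
  rewrite lef_pV2 ?posrE //.
  lra.
have chiQt : chi2 Qt P = t^+2 * B.
  rewrite /chi2 /B /chi2 mulr_sumr; apply: eq_bigr => x _.
  by rewrite Qtd (exprMn 2 t) -mulrA.
have KLpos : 0 < KL Qt P.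
  apply: lt_le_trans (@pinsker R X Qt P (minf P) Qt0 hPX Qts Psum m0 mP).
  by rewrite chiQt; apply: mulr_gt0 => //; apply: mulr_gt0 => //; apply: exprn_gt0.
apply: (le_trans (y := (KL (applyW PXY Qt) (applyW PXY P) / KL Qt P)%:E)); last first.
  by apply: ereal_sup_ubound; exists Qt => //.
rewrite lee_fin.
have tK0 : 0 < 1 - t * K' by lra.
have tK1 : 0 < 1 + t * K by apply: ltr_wpDr => //; apply: mulr_ge0 => //; exact: ltW.
apply: (le_trans (y := a * (1 - t * K') / (1 + t * K))).
  have -> : a - ep = a * (1 - t * K') / (1 + t * K) - (ep - a * t * (K + K') / (1 + t * K)).
    by rewrite /a; field; rewrite !gt_eqF.
  rewrite gerDl oppr_le0 subr_ge0.
  apply: (le_trans (y := a * t * (K + K'))).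
    rewrite ler_pdivrMr // ler_peMr //; first by apply: mulr_ge0; [apply: mulr_ge0 => //; exact: ltW|apply: addr_ge0].
    by rewrite lerDl; apply: mulr_ge0 => //; exact: ltW.
  by rewrite (mulrC a) -mulrA; apply: le_trans taK _.
rewrite ler_pdivlMr //.
apply: (le_trans (y := a * (1 - t * K') / (1 + t * K) * (t^+2 * B / (2 * (1 - t * K'))))).
  apply: ler_wpM2l => //.
  by apply: divr_ge0; [apply: mulr_ge0 => //; exact: ltW|exact: ltW].
apply: le_trans KLlow.
by apply: eq_le'; rewrite /a; field; rewrite !gt_eqF.
Qed.
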